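(* Let $(\mathfrak{g},[-,-],d_\mathfrak{g},\vartheta)$ be a curved Lie algebra. Its curved universal enveloping algebra (the value at $\mathfrak{g}$ of the left adjoint $\mathfrak{U}$ of the skew-symmetrization functor $\mathrm{Skew}$ from curved associative algebras to curved Lie algebras) is isomorphic to $$\mathfrak{U}(\mathfrak{g})\cong\overline{T}(\mathfrak{g})/\big(x\otimes y-(-1)^{|x||y|}y\otimes x-[x,y]\big),$$ where $\overline{T}(\mathfrak{g})$ is the non-unital tensor algebra on $\mathfrak{g}$ and the quotient is by the two-sided ideal generated by these elements, with pre-differential induced by the derivation extending $d_\mathfrak{g}$ and with curvature the image of $\vartheta$ under $\mathfrak{g}\hookrightarrow\mathfrak{U}(\mathfrak{g})$.
   Context: Ground field $\mathbb{K}$ of characteristic $0$, graded modules with Koszul signs. A curved Lie algebra is a graded Lie algebra $(\mathfrak{g},[-,-])$ with a degree $-1$ derivation $d_\mathfrak{g}$ and $\vartheta\in\mathfrak{g}_{-2}$ with $d_\mathfrak{g}^2=[\vartheta,-]$ and $d_\mathfrak{g}\vartheta=0$. A curved associative algebra is a non-unital graded associative algebra $(A,\mu_A)$ with a degree $-1$ derivation $d_A$ and $\vartheta\in A_{-2}$ with $d_A^2=\mu_A(\vartheta,-)-\mu_A(-,\vartheta)$ and $d_A\vartheta=0$. Morphisms in both categories commute with structure, pre-differentials and curvatures. $\mathrm{Skew}$ sends $(A,\mu_A,d_A,\vartheta)$ to $(A,\mu_A-\mu_A^{(12)},d_A,\vartheta)$, i.e. $[x,y]=\mu_A(x,y)-(-1)^{|x||y|}\mu_A(y,x)$.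 *)

(* Defs.v *)
From HB Require Import structures.
From mathcomp Require Import all_boot all_order all_algebra.
Set Implicit Arguments. Unset Strict Implicit. Unset Printing Implicit Defensive.
Import Order.TTheory GRing.Theory Num.Theory.
Local Open Scope ring_scope.

Section Graded.
Variable K : fieldType.

(* Z-graded vector space: a single K-vector space V together with the
   homogeneous-component predicates hom n (V_n), forming an internal direct
   sum V = (+)_n V_n. *)
Definition is_graded (V : lmodType K) (hom : int -> V -> Prop) : Prop :=
  (forall n, hom n 0) /\
  (forall n (a : K) (u v : V), hom n u -> hom n v -> hom n (a *: u + v)) /\
  (forall v : V, exists (s : seq int) (c : int -> V),
       uniq s /\ (forall n, hom n (c n)) /\ v = \sum_(n <- s) c n) /\
  (forall (s : seq int) (c : int -> V), uniq s -> (forall n, hom n (c n)) ->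
       \sum_(n <- s) c n = 0 -> forall n, n \in s -> c n = 0).

Record gmod := GMod {
  gcar :> lmodType K;
  hom : int -> gcar -> Prop;
  hom_graded : is_graded hom }.

Definition ks (m n : int) : K := (-1) ^+ (absz (m * n)).

Definition is_lin (V W : lmodType K) (f : V -> W) : Prop :=
  forall (a : K) (u v : V), f (a *: u + v) = a *: f u + f v.

Definition is_bilin (V W : lmodType K) (b : V -> V -> W) : Prop :=
  (forall z, is_lin (b ^~ z)) /\ (forall x, is_lin (b x)).

Definition deg_map (V W : gmod) (k : int) (f : V -> W) : Prop :=
  is_lin f /\ forall n x, hom n x -> hom (n + k) (f x).

Definition is_curved_lie (g : gmod) (br : g -> g -> g) (d : g -> g)
    (th : g) : Prop :=
  is_bilin br /\
  (forall m n x y, hom m x -> hom n y -> hom (m + n) (br x y)) /\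
  (forall m n x y, hom m x -> hom n y -> br x y = - (ks m n *: br y x)) /\
  (forall m n p x y z, hom m x -> hom n y -> hom p z ->
      ks m p *: br x (br y z) + ks n m *: br y (br z x)
      + ks p n *: br z (br x y) = 0) /\
  deg_map (-1) d /\
  (forall m x y, hom m x ->
      d (br x y) = br (d x) y + (-1) ^+ (absz m) *: br x (d y)) /\
  hom (-2) th /\
  (forall x, d (d x) = br th x) /\
  d th = 0.

Record curved_lie (g : gmod) := CLie {
  lbr : g -> g -> g;
  ld : g -> g;
  lth : g;
  lax : is_curved_lie lbr ld lth }.

Definition is_gassoc (A : gmod) (mu : A -> A -> A) : Prop :=
  is_bilin mu /\
  (forall m n x y, hom m x -> hom n y -> hom (m + n) (mu x y)) /\
  (forall x y z, mu (mu x y) z = mu x (mu y z)).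

Definition is_curved_assoc (A : gmod) (mu : A -> A -> A) (d : A -> A)
    (th : A) : Prop :=
  is_gassoc mu /\
  deg_map (-1) d /\
  (forall m x y, hom m x ->
      d (mu x y) = mu (d x) y + (-1) ^+ (absz m) *: mu x (d y)) /\
  hom (-2) th /\
  (forall x, d (d x) = mu th x - mu x th) /\
  d th = 0.

Definition is_alg_morph (A B : gmod) (muA : A -> A -> A) (muB : B -> B -> B)
    (h : A -> B) : Prop :=
  deg_map 0 h /\ forall x y, h (muA x y) = muB (h x) (h y).

Definition is_curved_assoc_morph (A B : gmod)
    (muA : A -> A -> A) (dA : A -> A) (thA : A)
    (muB : B -> B -> B) (dB : B -> B) (thB : B) (h : A -> B) : Prop :=
  is_alg_morph muA muB h /\ (forall x, h (dA x) = dB (h x)) /\ h thA = thB.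

Definition skew_br (A : gmod) (mu : A -> A -> A) (m n : int) (x y : A) : A :=
  mu x y - ks m n *: mu y x.

(* f : g -> Skew(A) is a morphism of graded Lie algebras (the bracket
   condition is imposed on homogeneous elements; by bilinearity this is the
   condition f [x,y] = [f x, f y]_Skew for all x y). *)
Definition is_lie_morph_to_skew (g : gmod) (br : g -> g -> g)
    (A : gmod) (mu : A -> A -> A) (f : g -> A) : Prop :=
  deg_map 0 f /\
  forall m n x y, hom m x -> hom n y -> f (br x y) = skew_br mu m n (f x) (f y).

Definition is_curved_lie_morph_to_skew (g : gmod) (L : curved_lie g)
    (A : gmod) (mu : A -> A -> A) (dA : A -> A) (thA : A) (f : g -> A) : Prop :=
  is_lie_morph_to_skew (lbr L) mu f /\
  (forall x, f (ld L x) = dA (f x)) /\ f (lth L) = thA.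

(* (B, muB, iota) is the non-unital graded associative algebra
     Tbar(g) / ( x (x) y - (-1)^{|x||y|} y (x) x - [x,y] ),
   characterised by the universal property of this presentation:
   iota : g -> B is a degree-0 linear map satisfying the relations, and every
   degree-0 linear map f : g -> A into a graded associative algebra satisfying
   the relations factors uniquely through iota by an algebra morphism. *)
Definition presents_Tbar_quotient (g : gmod) (L : curved_lie g)
    (B : gmod) (muB : B -> B -> B) (iota : g -> B) : Prop :=
  is_gassoc muB /\ is_lie_morph_to_skew (lbr L) muB iota /\
  forall (A : gmod) (muA : A -> A -> A), is_gassoc muA ->
  forall f : g -> A, is_lie_morph_to_skew (lbr L) muA f ->
    (exists h : B -> A, is_alg_morph muB muA h /\ forall x, h (iota x) = f x) /\
    (forall h1 h2 : B -> A, is_alg_morph muB muA h1 -> is_alg_morph muB muA h2 ->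
       (forall x, h1 (iota x) = f x) -> (forall x, h2 (iota x) = f x) ->
       forall b, h1 b = h2 b).

(* (B, muB, dB, thB) with iota is a universal arrow from g to the functor
   Skew, i.e. it is (isomorphic to) the value at g of the left adjoint U. *)
Definition universal_arrow_to_Skew (g : gmod) (L : curved_lie g)
    (B : gmod) (muB : B -> B -> B) (dB : B -> B) (thB : B) (iota : g -> B)
    : Prop :=
  is_curved_assoc muB dB thB /\
  is_curved_lie_morph_to_skew L muB dB thB iota /\
  forall (A : gmod) (muA : A -> A -> A) (dA : A -> A) (thA : A),
    is_curved_assoc muA dA thA ->
  forall f : g -> A, is_curved_lie_morph_to_skew L muA dA thA f ->
    (exists h : B -> A, is_curved_assoc_morph muB dB thB muA dA thA h /\
                        forall x, h (iota x) = f x) /\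
    (forall h1 h2 : B -> A,
       is_curved_assoc_morph muB dB thB muA dA thA h1 ->
       is_curved_assoc_morph muB dB thB muA dA thA h2 ->
       (forall x, h1 (iota x) = f x) -> (forall x, h2 (iota x) = f x) ->
       forall b, h1 b = h2 b).

End Graded.

(* Main.v *)
Require Import Defs.
From HB Require Import structures.
From mathcomp Require Import all_boot all_order all_algebra.
From Stdlib Require Import ClassicalEpsilon.
Import GRing.Theory.
Set Implicit Arguments. Unset Strict Implicit. Unset Printing Implicit Defensive.
Local Open Scope ring_scope.

Section Aux.
Variable K : fieldType.

Definition sgn (z : int) : K := (-1) ^+ absz z.

Lemma sgnE z : sgn z = (-1) ^ z.
Proof. by case: z => n //=; rewrite /sgn /= -invr_sign. Qed.

Lemma sgnD a b : sgn (a + b) = sgn a * sgn b.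
Proof. by rewrite !sgnE exprzDr ?unitrN1. Qed.

Lemma sgnN a : sgn (- a) = sgn a.
Proof. by rewrite /sgn abszN. Qed.

Lemma sgn_sq a : sgn a * sgn a = 1.
Proof. by rewrite /sgn -exprD addnn -mul2n exprM expr2 mulN1r opprK expr1n. Qed.

Lemma ks_m1 m n : ks K (m + -1) n = ks K m n * sgn n.
Proof. by rewrite /ks -!/(sgn _) mulrDl mulN1r sgnD sgnN. Qed.

Lemma ks_n1 m n : sgn m * ks K m (n + -1) = ks K m n.
Proof.
by rewrite /ks -!/(sgn _) mulrDr mulrN1 sgnD sgnN mulrCA sgn_sq mulr1.
Qed.

Lemma ks_m2 n : ks K (-2) n = 1.
Proof.
rewrite /ks -!/(sgn _) mulNr sgnN (_ : 2 * n = n + n); last first.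
  by rewrite mulrDl mul1r.
by rewrite sgnD sgn_sq.
Qed.

Section Lin.
Variables V W : lmodType K.
Variable F : V -> W.
Hypothesis HF : is_lin F.

Lemma lin0 : F 0 = 0.
Proof.
have := HF 1 0 0; rewrite scale1r addr0.
by move/(congr1 (fun x => x - F 0)); rewrite addrK subrr scale1r.
Qed.

Lemma linD u v : F (u + v) = F u + F v.
Proof. by have := HF 1 u v; rewrite !scale1r. Qed.

Lemma linZ a u : F (a *: u) = a *: F u.
Proof. by have := HF a u 0; rewrite !addr0 lin0 addr0. Qed.

Lemma linN u : F (- u) = - F u.
Proof. by rewrite -scaleN1r linZ scaleN1r. Qed.

Lemma linB u v : F (u - v) = F u - F v.
Proof. by rewrite linD linN. Qed.

Lemma lin_sum (I : Type) (s : seq I) (c : I -> V) :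
  F (\sum_(i <- s) c i) = \sum_(i <- s) F (c i).
Proof.
elim: s => [|i s IH]; first by rewrite !big_nil lin0.
by rewrite !big_cons linD IH.
Qed.
End Lin.

Lemma lin_comp (U V W : lmodType K) (F : V -> W) (G : U -> V) :
  is_lin F -> is_lin G -> is_lin (F \o G).
Proof. by move=> HF HG a u v /=; rewrite HG HF. Qed.

Lemma lin_id (V : lmodType K) : is_lin (@id V).
Proof. by []. Qed.

Section Graded.
Variable V : gmod K.

Lemma hom0 n : Defs.hom n (0 : V).
Proof. by case: (Defs.hom_graded V). Qed.

Lemma homL n a (u v : V) : Defs.hom n u -> Defs.hom n v -> Defs.hom n (a *: u + v).
Proof. by case: (Defs.hom_graded V) => _ [H _]; apply: H. Qed.

Lemma homZ n a (u : V) : Defs.hom n u -> Defs.hom n (a *: u).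
Proof. by move=> h; rewrite -[_ *: _]addr0; apply: homL => //; apply: hom0. Qed.

Lemma homD n (u v : V) : Defs.hom n u -> Defs.hom n v -> Defs.hom n (u + v).
Proof. by move=> h1 h2; rewrite -[u]scale1r; apply: homL. Qed.

Lemma homB n (u v : V) : Defs.hom n u -> Defs.hom n v -> Defs.hom n (u - v).
Proof. by move=> h1 h2; rewrite addrC -scaleN1r; apply: homL. Qed.

Lemma hom_dec (v : V) : exists (s : seq int) (c : int -> V),
       uniq s /\ (forall n, Defs.hom n (c n)) /\ v = \sum_(n <- s) c n.
Proof. by case: (Defs.hom_graded V) => _ [_ [H _]]; apply: H. Qed.

Lemma hom_uniq (s : seq int) (c : int -> V) : uniq s -> (forall n, Defs.hom n (c n)) ->
       \sum_(n <- s) c n = 0 -> forall n, n \in s -> c n = 0.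
Proof. by case: (Defs.hom_graded V) => _ [_ [_ H]]; apply: H. Qed.

Lemma lin_eq_hom (W : lmodType K) (F G : V -> W) : is_lin F -> is_lin G ->
  (forall m x, Defs.hom m x -> F x = G x) -> forall v, F v = G v.
Proof.
move=> HF HG E v; have [s [c [_ [hc ->]]]] := hom_dec v.
rewrite !lin_sum //; apply: eq_bigr => n _; exact: E (hc n).
Qed.
End Graded.

Lemma ext_sum (W : nmodType) (F : int -> W) (s u : seq int) :
  uniq s -> uniq u -> {subset s <= u} ->
  \sum_(n <- s) F n = \sum_(n <- u) (if n \in s then F n else 0).
Proof.
move=> us uu su; rewrite -big_mkcond -big_filter; apply: perm_big.
apply: uniq_perm => //; first exact: filter_uniq.
by move=> n; rewrite mem_filter; case E: (n \in s) => //=; rewrite su.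
Qed.


Section Parity.
Variable V : gmod K.

Definition ext (s : seq int) (c : int -> V) n := if n \in s then c n else 0.

Definition is_dec (v : V) (s : seq int) (c : int -> V) :=
  uniq s /\ (forall n, Defs.hom n (c n)) /\ v = \sum_(n <- s) c n.

Lemma sum_ext (s u : seq int) (c : int -> V) (f : int -> K) :
  uniq s -> uniq u -> {subset s <= u} ->
  \sum_(n <- s) f n *: c n = \sum_(n <- u) f n *: ext s c n.
Proof.
move=> us uu su; rewrite (ext_sum (fun n => f n *: c n) us uu su); apply: eq_bigr => n _.
by rewrite /ext; case: (n \in s); rewrite ?scaler0.
Qed.

Lemma sum_ext1 (s u : seq int) (c : int -> V) :
  uniq s -> uniq u -> {subset s <= u} ->
  \sum_(n <- s) c n = \sum_(n <- u) ext s c n.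
Proof.
move=> us uu su; have := sum_ext c (fun _ => 1) us uu su.
by under eq_bigr do rewrite scale1r; under [in RHS]eq_bigr do rewrite scale1r.
Qed.

Lemma hom_ext s c : (forall n, Defs.hom n (c n)) -> forall n, Defs.hom n (ext s c n).
Proof. by move=> hc n; rewrite /ext; case: (n \in s) => //; apply: hom0. Qed.

Lemma dec_common v s c s' c' : is_dec v s c -> is_dec v s' c' ->
  forall n, n \in undup (s ++ s') -> ext s c n = ext s' c' n.
Proof.
move=> [us [hc ev]] [us' [hc' ev']].
set u := undup (s ++ s').
have uu : uniq u by apply: undup_uniq.
have su : {subset s <= u} by move=> n; rewrite mem_undup mem_cat => ->.
have su' : {subset s' <= u} by move=> n; rewrite mem_undup mem_cat => ->; rewrite orbT.
move=> n nu; apply/eqP; rewrite -subr_eq0; apply/eqP; move: n nu.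
apply: (hom_uniq uu).
  by move=> n; apply: homB; apply: hom_ext.
rewrite sumrB -(sum_ext1 _ us uu su) -(sum_ext1 _ us' uu su') -ev -ev'.
by rewrite subrr.
Qed.

Lemma Psum_indep v s c s' c' (f : int -> K) : is_dec v s c -> is_dec v s' c' ->
  \sum_(n <- s) f n *: c n = \sum_(n <- s') f n *: c' n.
Proof.
move=> d d'; have E := dec_common d d'.
case: d => [us _]; case: d' => [us' _].
set u := undup (s ++ s').
have uu : uniq u by apply: undup_uniq.
have su : {subset s <= u} by move=> n; rewrite mem_undup mem_cat => ->.
have su' : {subset s' <= u} by move=> n; rewrite mem_undup mem_cat => ->; rewrite orbT.
rewrite (sum_ext _ _ us uu su) (sum_ext _ _ us' uu su').
by apply: eq_big_seq => n nu; rewrite E.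
Qed.

Lemma dec_ex v : exists sc : seq int * (int -> V), is_dec v sc.1 sc.2.
Proof. by have [s [c H]] := hom_dec v; exists (s, c). Qed.

Definition dec v := proj1_sig (constructive_indefinite_description _ (dec_ex v)).
Lemma decP v : is_dec v (dec v).1 (dec v).2.
Proof. exact: (proj2_sig (constructive_indefinite_description _ (dec_ex v))). Qed.

Definition scal_map (f : int -> K) (v : V) : V :=
  \sum_(n <- (dec v).1) f n *: (dec v).2 n.

Lemma scal_map_dec f v s c : is_dec v s c ->
  scal_map f v = \sum_(n <- s) f n *: c n.
Proof. by move=> d; apply: Psum_indep (decP v) d. Qed.

Lemma scal_map_lin f : is_lin (scal_map f).
Proof.
move=> a x y.
have [s1 c1] := (dec x); have d1 := decP x; have d2 := decP y.
move: d1 d2; set S1 := (dec x).1; set C1 := (dec x).2;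
  set S2 := (dec y).1; set C2 := (dec y).2 => d1 d2.
set u := undup (S1 ++ S2).
have uu : uniq u by apply: undup_uniq.
have su : {subset S1 <= u} by move=> n; rewrite mem_undup mem_cat => ->.
have su' : {subset S2 <= u} by move=> n; rewrite mem_undup mem_cat => ->; rewrite orbT.
case: (d1) => [us1 [hc1 e1]]; case: (d2) => [us2 [hc2 e2]].
have d : is_dec (a *: x + y) u (fun n => a *: ext S1 C1 n + ext S2 C2 n).
  split=> //; split.
    by move=> n; apply: homL; apply: hom_ext.
  rewrite big_split /= -scaler_sumr.
  by rewrite -(sum_ext1 _ us1 uu su) -(sum_ext1 _ us2 uu su') -e1 -e2.
rewrite (scal_map_dec f d) (scal_map_dec f d1) (scal_map_dec f d2).
rewrite (sum_ext _ _ us1 uu su) (sum_ext _ _ us2 uu su') scaler_sumr -big_split.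
by apply: eq_bigr => n _; rewrite scalerDr scalerA mulrC -scalerA.
Qed.

Lemma scal_map_hom f m x : Defs.hom m x -> scal_map f x = f m *: x.
Proof.
move=> hx.
have d : is_dec x [:: m] (fun n => if n == m then x else 0).
  split=> //; split; last by rewrite big_seq1 eqxx.
  by move=> n; case: eqP => [->|_] //; apply: hom0.
by rewrite (scal_map_dec f d) big_seq1 eqxx.
Qed.

Lemma parity_ex : exists P : V -> V, is_lin P /\
  forall m x, Defs.hom m x -> P x = sgn m *: x.
Proof. exists (scal_map sgn); split; [exact: scal_map_lin | exact: scal_map_hom]. Qed.

End Parity.
End Aux.

Section Sqz.
Variable K : fieldType.
Variable B : gmod K.
Variable k : int.

Lemma sum_fst (I : Type) (s : seq I) (F : I -> (B * B)%type) :
  (\sum_(i <- s) F i).1 = \sum_(i <- s) (F i).1.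
Proof. by elim: s => [|i s IH]; rewrite ?big_nil ?big_cons //= IH. Qed.

Lemma sum_snd (I : Type) (s : seq I) (F : I -> (B * B)%type) :
  (\sum_(i <- s) F i).2 = \sum_(i <- s) (F i).2.
Proof. by elim: s => [|i s IH]; rewrite ?big_nil ?big_cons //= IH. Qed.

Lemma pair_ext (u v : (B * B)%type) : u.1 = v.1 -> u.2 = v.2 -> u = v.
Proof. by case: u; case: v => ? ? ? ? /= -> ->. Qed.

Definition sqhom (n : int) (p : (B * B)%type) :=
  Defs.hom n p.1 /\ Defs.hom (n + k) p.2.

Lemma shift_sum (W : nmodType) (s : seq int) (F : int -> W) :
  \sum_(n <- s) F (n + k) = \sum_(m <- map (fun n => n + k) s) F m.
Proof. by rewrite big_map. Qed.

Lemma shift_uniq (s : seq int) : uniq s -> uniq (map (fun n => n + k) s).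
Proof. by move=> us; rewrite map_inj_uniq // => x y /addIr. Qed.

Lemma sq_graded : is_graded sqhom.
Proof.
split; first by move=> n; split; apply: hom0.
split; first by move=> n a u v [h1 h2] [h3 h4]; split; apply: homL.
split.
  move=> [a b].
  have [[s1 c1] [us1 [hc1 e1]]] := dec_ex a.
  have [[s2 c2] [us2 [hc2 e2]]] := dec_ex b.
  simpl in *.
  set u := undup (s1 ++ map (fun n => n - k) s2).
  have uu : uniq u by apply: undup_uniq.
  have su : {subset s1 <= u} by move=> n; rewrite mem_undup mem_cat => ->.
  exists u, (fun n => (ext s1 c1 n, ext s2 c2 (n + k))).
  split=> //; split.
    by move=> n; split; apply: hom_ext.
  apply: pair_ext.
    by rewrite sum_fst /= e1; apply: sum_ext1.
  rewrite sum_snd /= shift_sum e2; apply: sum_ext1 => //.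
    exact: shift_uniq.
  move=> n ns2; apply/mapP; exists (n - k); last by rewrite subrK.
  by rewrite mem_undup mem_cat; apply/orP; right; apply: map_f.
move=> s c us hc e n ns.
have E1 : (c n).1 = 0.
  apply: (hom_uniq us (c := fun n => (c n).1)) => //.
    by move=> m; case: (hc m).
  by rewrite -sum_fst e.
have E2 : (c n).2 = 0.
  have := hom_uniq (shift_uniq us) (c := fun m => (c (m - k)).2).
  rewrite -shift_sum.
  under eq_bigr do rewrite addrK.
  rewrite -sum_snd e => /(_ _ _ (n + k)); rewrite addrK; apply => //.
    by move=> m; case: (hc (m - k)); rewrite subrK.
  exact: map_f.
by move: E1 E2; case: (c n) => x y /= -> ->.
Qed.

Definition sqz : gmod K := @GMod K (B * B)%type sqhom sq_graded.

Variable mu : B -> B -> B.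
Variable S : B -> B.
Hypothesis Hmu : is_gassoc mu.
Hypothesis HS : is_lin S.
Hypothesis HSm : forall x y, S (mu x y) = mu (S x) (S y).
Hypothesis HSh : forall m x, Defs.hom m x -> Defs.hom m (S x).

Definition sqmu (p q : sqz) : sqz := (mu p.1 q.1, mu p.2 q.1 + mu (S p.1) q.2).

Lemma muL z : is_lin (mu^~ z). Proof. by case: Hmu => [[]]. Qed.
Lemma muR x : is_lin (mu x). Proof. by case: Hmu => [[]]. Qed.

Lemma sqmu_gassoc : is_gassoc sqmu.
Proof.
case: Hmu => [[HL HR] [Hh Ha]].
split; [split|split].
- move=> z a u v; apply: pair_ext => /=.
    exact: HL.
  by rewrite HS (HL z.1) (HL z.2) scalerDr addrACA.
- move=> x a u v; apply: pair_ext => /=.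
    exact: HR.
  by rewrite (HR x.2) (HR (S x.1)) scalerDr addrACA.
- move=> m n p q [hp1 hp2] [hq1 hq2]; split; first exact: Hh.
  apply: homD.
    by rewrite addrAC; apply: Hh.
  by rewrite -addrA; apply: Hh => //; apply: HSh.
- move=> x y z; apply: pair_ext => /=.
    exact: Ha.
  by rewrite (linD (HL _)) (linD (HR _)) !Ha HSm !Ha addrA.
Qed.

End Sqz.

Section Gen.
Variable K : fieldType.

Lemma linDf (V W : lmodType K) (F G : V -> W) : is_lin F -> is_lin G ->
  is_lin (fun x => F x + G x).
Proof. by move=> HF HG a u v; rewrite HF HG scalerDr addrACA. Qed.

Lemma linBf (V W : lmodType K) (F G : V -> W) : is_lin F -> is_lin G ->
  is_lin (fun x => F x - G x).
Proof.
by move=> HF HG a u v; rewrite HF HG scalerBr opprD addrACA.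
Qed.

Lemma skew_eq (V : lmodType K) (X1 X2 X3 X4 : V) (sm sn kk k' : K) :
  sm * k' = kk ->
  X1 - (kk * sn) *: X2 + sm *: (X3 - k' *: X4) =
  X1 + sm *: X3 - kk *: (X4 + sn *: X2).
Proof.
move=> H; rewrite scalerBr scalerA H scalerDr scalerA opprD !addrA.
by rewrite [X1 - _ + _]addrAC addrAC.
Qed.

Lemma parity_mul (B : gmod K) (mu : B -> B -> B) (P : B -> B) :
  is_gassoc mu -> is_lin P -> (forall m x, Defs.hom m x -> P x = sgn K m *: x) ->
  forall x y, P (mu x y) = mu (P x) (P y).
Proof.
move=> [[HL HR] [Hh _]] HP HPh.
have step : forall m x, Defs.hom m x -> forall y, P (mu x y) = mu (P x) (P y).
  move=> m x hx; apply: lin_eq_hom.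
  - exact: lin_comp HP (HR x).
  - exact: lin_comp (HR _) HP.
  move=> n y hy; rewrite (HPh _ _ (Hh _ _ _ _ hx hy)) (HPh _ _ hx) (HPh _ _ hy).
  by rewrite (linZ (HL _)) (linZ (HR _)) scalerA sgnD.
move=> x y; move: x; apply: lin_eq_hom.
- exact: lin_comp HP (HL y).
- exact: lin_comp (HL _) HP.
by move=> m x hx; exact: (step m x hx y).
Qed.

Lemma parity_hom (B : gmod K) (P : B -> B) :
  (forall m x, Defs.hom m x -> P x = sgn K m *: x) ->
  forall m x, Defs.hom m x -> Defs.hom m (P x).
Proof. by move=> HPh m x hx; rewrite (HPh _ _ hx); apply: homZ. Qed.

Lemma der_gen (B : gmod K) (mu : B -> B -> B) (D P : B -> B) :
  is_gassoc mu -> is_lin D -> is_lin P ->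
  (forall m x, Defs.hom m x -> P x = sgn K m *: x) ->
  (forall m x y, Defs.hom m x -> D (mu x y) = mu (D x) y + (-1) ^+ (absz m) *: mu x (D y)) ->
  forall x y, D (mu x y) = mu (D x) y + mu (P x) (D y).
Proof.
move=> [[HL HR] _] HD HP HPh Hder x y; move: x; apply: lin_eq_hom.
- exact: lin_comp HD (HL y).
- apply: linDf; [exact: lin_comp (HL _) HD | exact: lin_comp (HL _) HP].
by move=> m x hx; rewrite /= (Hder m) // (HPh _ _ hx) (linZ (HL _)).
Qed.

Lemma comp_lie (g : gmod K) (L : curved_lie g) (B A : gmod K)
  (muB : B -> B -> B) (muA : A -> A -> A) (iota : g -> B) (h : B -> A) :
  is_alg_morph muB muA h -> is_lie_morph_to_skew (lbr L) muB iota ->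
  is_lie_morph_to_skew (lbr L) muA (fun x => h (iota x)).
Proof.
move=> [[hl hh] hm] [[il ih] ibr]; split; first split.
- exact: lin_comp hl il.
- by move=> n x hx; apply: hh; rewrite -[n]addr0; apply: ih.
move=> m n x y hx hy; rewrite /= (ibr m n) // /skew_br (linB hl) (linZ hl) !hm //.
Qed.

End Gen.

Unset Implicit Arguments.

Theorem proposition3p13 (K : fieldType) (charK0 : [pchar K] =i pred0)
    (g : gmod K) (L : curved_lie g)
    (B : gmod K) (muB : B -> B -> B) (iota : g -> B)
    (HB : presents_Tbar_quotient L muB iota) :
  exists dB : B -> B,
    (* dB is the derivation of B induced by d_g *)
    (forall x, dB (iota x) = iota (ld L x)) /\
    (* with curvature iota(theta), B is U(g): a universal arrow g -> Skew *)
    universal_arrow_to_Skew L muB dB (iota (lth L)) iota.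
Proof.
case: HB => HBa [Hio HU].
have HBa' := HBa; case: HBa' => [[HL HR] [Hh Ha]].
have Hio' := Hio; case: Hio' => [[il ih] ibr].
have HLie := lax L; case: HLie => [_ [_ [_ [_ [[dl dh] [dder [thh [dd dth]]]]]]]].
have ih0 : forall n x, Defs.hom n x -> Defs.hom n (iota x).
  by move=> n x hx; rewrite -[n]addr0; apply: ih.
have [P [HPl HPh]] := parity_ex B.
have PM := parity_mul HBa HPl HPh.
have PH := parity_hom HPh.
pose A1 := sqz B (-1).
pose mu1 : A1 -> A1 -> A1 := sqmu muB P.
have H1a : is_gassoc mu1 := sqmu_gassoc (-1) HBa HPl PM PH.
pose f1 : g -> A1 := fun x => (iota x, iota (ld L x)).
have f1L : is_lie_morph_to_skew (lbr L) mu1 f1.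
  split; first split.
  - move=> a u v; apply: pair_ext => /=; first exact: il.
    by rewrite dl il.
  - move=> n x hx; split => /=; rewrite addr0; first exact: ih0.
    by apply: ih0; apply: dh.
  move=> m n x y hx hy; apply: pair_ext => /=; first exact: ibr.
  have hdx := dh _ _ hx; have hdy := dh _ _ hy.
  rewrite (dder m) // (linD il) (linZ il) (ibr (m + -1) n) // (ibr m (n + -1)) //.
  rewrite /skew_br /= (HPh _ _ (ih0 _ _ hx)) (HPh _ _ (ih0 _ _ hy)).
  rewrite !(linZ (HL _)) ks_m1; apply: skew_eq.
  exact: ks_n1.
have [[H1 [[[H1l H1h] H1m] H1f]] _] := HU A1 mu1 H1a f1 f1L.
have fst1 : forall b, (H1 b).1 = b.
  have [_ Hu] := HU B muB HBa iota Hio.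
  move=> b; symmetry; apply: (Hu id (fun b => (H1 b).1)) => //.
  - split; [split; [by [] | by move=> n x; rewrite addr0] | by []].
  - split; first split.
    + by move=> a u v; rewrite H1l.
    + by move=> n x hx; case: (H1h n x hx).
    + by move=> x y; rewrite H1m.
  - by move=> x; rewrite H1f.
pose dB := fun b => (H1 b).2.
have dBi : forall x, dB (iota x) = iota (ld L x) by move=> x; rewrite /dB H1f.
have dBl : is_lin dB by move=> a u v; rewrite /dB H1l.
have dBh : forall n x, Defs.hom n x -> Defs.hom (n + -1) (dB x).
  by move=> n x hx; case: (H1h n x hx); rewrite addr0.
have dBg : forall x y, dB (muB x y) = muB (dB x) y + muB (P x) (dB y).
  by move=> x y; rewrite /dB H1m /= !fst1.
have dBd : forall m x y, Defs.hom m x ->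
    dB (muB x y) = muB (dB x) y + (-1) ^+ (absz m) *: muB x (dB y).
  by move=> m x y hx; rewrite dBg (HPh _ _ hx) (linZ (HL _)).
have sgm1 : forall m : int, (-1) ^+ absz (m + -1) = - (-1) ^+ absz m :> K.
  by move=> m; have := sgnD K m (-1); rewrite /sgn => ->; rewrite /= expr1 mulrN1.
pose th := iota (lth L).
have dd2 : forall x, dB (dB x) = muB th x - muB x th.
  pose A2 := sqz B (-2).
  pose mu2 : A2 -> A2 -> A2 := sqmu muB id.
  have H2a : is_gassoc mu2 :=
    sqmu_gassoc (-2) HBa (@lin_id K B) (fun x y => erefl) (fun m x h => h).
  pose ha : B -> A2 := fun b => (b, dB (dB b)).
  pose hb : B -> A2 := fun b => (b, muB th b - muB b th).
  have hbl := linBf (HR th) (HL th).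
  have haM : is_alg_morph muB mu2 ha.
    split; first split.
    - by move=> a u v; apply: pair_ext => //=; rewrite !dBl.
    - move=> n x hx; split => /=; rewrite addr0 //.
      have := dBh _ _ (dBh _ _ hx); rewrite -addrA //.
    move=> x y; apply: pair_ext => //=; move: x; apply: lin_eq_hom.
    - exact: lin_comp dBl (lin_comp dBl (HL y)).
    - apply: linDf; [exact: lin_comp (HL y) (lin_comp dBl dBl) | exact: HL].
    move=> m x hx /=.
    rewrite (dBd m) // (linD dBl) (dBd (m + -1) _ _ (dBh _ _ hx)).
    rewrite (linZ dBl) (dBd m) //.
    have sq := sgn_sq K m; rewrite /sgn in sq.
    rewrite sgm1 scalerDr scalerA sq scale1r scaleNr addrA subrK //.
  have hbM : is_alg_morph muB mu2 hb.
    split; first split.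
    - by move=> a u v; apply: pair_ext => //=; rewrite hbl.
    - move=> n x hx; split => /=; rewrite addr0 //.
      have thh' : Defs.hom (-2) th := ih0 _ _ thh.
      by apply: homB; [rewrite addrC|]; apply: Hh.
    move=> x y; apply: pair_ext => //=.
    by rewrite (linB (HL y)) (linB (HR x)) !Ha addrA subrK.
  have Hu2 := (HU A2 mu2 H2a (fun x => ha (iota x)) (comp_lie haM Hio)).2.
  have agree : forall x, hb (iota x) = ha (iota x).
    apply: lin_eq_hom.
    - exact: lin_comp (hbM.1.1) il.
    - exact: lin_comp (haM.1.1) il.
    move=> n x hx; apply: pair_ext => //=.
    by rewrite !dBi dd (ibr (-2) n) // /skew_br ks_m2 scale1r.
  move=> b; have := Hu2 ha hb haM hbM (fun x => erefl) agree b.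
  by move/(congr1 snd).
exists dB; split => //.
split; last split.
- split => //; split; first by split.
  split => //; split; first exact: ih0.
  split => //.
  by rewrite dBi dth (lin0 il).
- by split => //; split.
move=> A muA dA thA HA f [Hfl [Hfd Hft]].
case: HA => [HAa [[dAl dAh] [dAd [thAh [dAA dAth]]]]].
have [[h [hM hf]] Hu] := HU A muA HAa f Hfl.
split; last first.
  by move=> h1 h2 [m1 _] [m2 _] e1 e2 b; exact: Hu h1 h2 m1 m2 e1 e2 b.
exists h; split => //; split => //; split; last by rewrite hf Hft.
have [PA [PAl PAh]] := parity_ex A.
have PAM := parity_mul HAa PAl PAh.
have PAH := parity_hom PAh.
pose A3 := sqz A (-1).
pose mu3 : A3 -> A3 -> A3 := sqmu muA PA.
have H3a : is_gassoc mu3 := sqmu_gassoc (-1) HAa PAl PAM PAH.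
have hM' := hM; case: hM' => [[hl hh] hm].
have h0 : forall n b, Defs.hom n b -> Defs.hom n (h b).
  by move=> n b hb; rewrite -[n]addr0; apply: hh.
have hP : forall b, h (P b) = PA (h b).
  apply: lin_eq_hom; [exact: lin_comp hl HPl | exact: lin_comp PAl hl |].
  by move=> m x hx /=; rewrite (HPh _ _ hx) (linZ hl) (PAh _ _ (h0 _ _ hx)).
pose p1 : B -> A3 := fun b => (h b, h (dB b)).
pose p2 : B -> A3 := fun b => (h b, dA (h b)).
have p1M : is_alg_morph muB mu3 p1.
  split; first split.
  - by move=> a u v; apply: pair_ext => /=; rewrite ?dBl hl.
  - move=> n x hx; split => /=; rewrite addr0; first exact: h0.
    by apply: h0; apply: dBh.
  move=> x y; apply: pair_ext => /=; first exact: hm.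
  by rewrite dBg (linD hl) !hm hP.
have p2M : is_alg_morph muB mu3 p2.
  split; first split.
  - by move=> a u v; apply: pair_ext => /=; rewrite hl ?dAl.
  - move=> n x hx; split => /=; rewrite addr0; first exact: h0.
    by apply: dAh; apply: h0.
  move=> x y; apply: pair_ext => /=; first exact: hm.
  by rewrite hm (der_gen HAa dAl PAl PAh dAd).
have Hu3 := (HU A3 mu3 H3a (fun x => p2 (iota x)) (comp_lie p2M Hio)).2.
have agree : forall x, p1 (iota x) = p2 (iota x).
  by move=> x; apply: pair_ext => //=; rewrite dBi !hf Hfd.
move=> b; have := Hu3 p1 p2 p1M p2M agree (fun x => erefl) b.
by move/(congr1 snd).
Qed.
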